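(* Let $L$ be an oriented graphical virtual link, let $D$ be a graphical (i.e. checkerboard colorable) diagram of $L$, and let $G_D$ be a signed Tait graph of $D$. Then $$V_L(t)=(-t^{-\frac{3}{4}})^{-w(D)}\,F[G_D]\big(t^{-\frac14},\,t^{\frac14},\,-t^{-\frac12}-t^{\frac12}\big).$$
   Context: Virtual links are equivalence classes of virtual link diagrams (plane curves with real and virtual crossings) under generalized Reidemeister moves. A virtual link is graphical if it is represented by a diagram obtained from a signed cyclic graph (graph with cyclic order of half-edges at each vertex and edge signs) by the medial construction; equivalently (by a result of the paper) it has a checkerboard colorable diagram. A diagram is checkerboard colorable if one can color a small neighbourhood of one side of each arc so that near each real crossing the colored sides alternate and near virtual crossings the colorings of the two strands pass through independently. Bracket polynomial: $\langle D\rangle(A,B,d)=\sum_{\sigma}A^{\alpha(\sigma)}B^{\beta(\sigma)}d^{|\sigma|-1}$ over all states $\sigma$ (choice of $A$- or $B$-smoothing at each real crossing), $\alpha,\beta$ the numbers of $A$-, $B$-smoothings, $|\sigma|$ the number of closed curves. The writhe $w(D)$ is the sum of the oriented signs $\pm1$ of the real crossings. The Jones polynomial is $V_L(t)=f(t^{-1/4})$ where $f(A)=(-A^3)^{-w(D)}\langle D\rangle(A,A^{-1},-A^2-A^{-2})$. Signed Tait graph (Chmutov–Pak): given a checkerboard coloring of $D$, thicken $D$ to a surface in which bands at virtual crossings pass without touching; the colored neighbourhoods form annuli whose exterior circles run along the diagram, jumping between strands at real crossings so that the two colored corners of each crossing lie on them. Replace each real crossing by an edge-ribbon joining the exterior-circle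 arcs at the colored corners and glue discs along the interior circles; this gives an orientable signed ribbon graph, i.e. a signed cyclic graph $G_D$ (vertices = capped annuli, edges = real crossings, sign $+$ iff the $A$-smoothing joins the two colored corners). The polynomial $F[G]$ of a signed cyclic graph: edges may be ''marked''; for an unmarked edge $e$, $G-e$ deletes $e$, $G(\bar e)$ keeps and marks $e$; $F[G]=B\,F[G-e]+A\,F[G(\bar e)]$ for positive $e$, $F[G]=A\,F[G-e]+B\,F[G(\bar e)]$ for negative $e$; for a spanning subgraph $H$ with all edges marked, $F[H]=d^{bc(H)-1}$, $bc(H)$ the number of boundary components of the ribbon graph of $H$. *)

(* Defs.v *)
From mathcomp Require Import all_boot all_order all_algebra.
Set Implicit Arguments. Unset Strict Implicit. Unset Printing Implicit Defensive.
Import Order.TTheory GRing.Theory Num.Theory.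

Definition o4 (k : nat) : 'I_4 := @inord 3 (k %% 4).

(* Virtual link diagrams, up to detour moves (virtual crossings are
   invisible in this combinatorial data).
   - vd_n real crossings; each crossing c has four ports (c,0),(c,1),(c,2),(c,3)
     listed in counterclockwise order around c;  ports 0,2 form the OVER
     strand, ports 1,3 the UNDER strand;
   - vd_match p = the port at the other end of the arc leaving port p;
   - vd_loops = number of closed components without real crossings;
   - orientation: vd_o02 c = over strand runs from port 0 to port 2,
                  vd_o13 c = under strand runs from port 1 to port 3.      *)
Record vdiagram := VDiagram {
  vd_n : nat;
  vd_loops : nat;
  vd_match : 'I_vd_n * 'I_4 -> 'I_vd_n * 'I_4;
  vd_o02 : 'I_vd_n -> bool;
  vd_o13 : 'I_vd_n -> bool }.

Definition port (D : vdiagram) := ('I_(vd_n D) * 'I_4)%type.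

Definition is_exit (D : vdiagram) (p : port D) : bool :=
  if ~~ odd p.2 then (val p.2 == 2) == @vd_o02 D p.1
  else (val p.2 == 3) == @vd_o13 D p.1.

Definition vd_wf (D : vdiagram) : Prop :=
  [/\ forall p : port D, @vd_match D (@vd_match D p) = p,
      forall p : port D, @vd_match D p != p,
      forall p : port D, is_exit (@vd_match D p) = ~~ is_exit p
    & 0 < vd_n D + vd_loops D].

(* oriented sign of a crossing (+1 iff the under strand crosses the over
   strand from right to left) and writhe *)
Definition csign (D : vdiagram) (c : 'I_(vd_n D)) : int :=
  if @vd_o02 D c == @vd_o13 D c then 1%R else (-1)%R.
Definition writhe (D : vdiagram) : int := (\sum_(c : 'I_(vd_n D)) csign c)%R.

(* states: s c = true means A-smoothing at c.  The A-regions of a crossing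
   (swept by rotating the over strand counterclockwise) are the corners
   (0,1) and (2,3); the A-smoothing joins them, i.e. reconnects ports
   1-2 and 3-0; the B-smoothing reconnects ports 0-1 and 2-3. *)
Definition smooth (D : vdiagram) (s : {ffun 'I_(vd_n D) -> bool}) (p : port D)
  : port D :=
  let i := val p.2 in
  if s p.1 then (p.1, if odd i then o4 i.+1 else o4 (i + 3))
  else (p.1, if odd i then o4 (i + 3) else o4 i.+1).

Definition state_rel (D : vdiagram) (s : {ffun 'I_(vd_n D) -> bool})
  : rel (port D) := fun p q =>
  [|| q == @vd_match D p, p == @vd_match D q, q == smooth s p | p == smooth s q].

Definition ncurves (D : vdiagram) (s : {ffun 'I_(vd_n D) -> bool}) : nat :=
  n_comp (state_rel s) predT + vd_loops D.

Local Open Scope ring_scope.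

Definition bracket (R : comNzRingType) (D : vdiagram) (A B d : R) : R :=
  \sum_(s : {ffun 'I_(vd_n D) -> bool})
     A ^+ #|[set c | s c]| * B ^+ #|[set c | ~~ s c]| * d ^+ (ncurves s).-1.

(* Jones polynomial V(t) evaluated at t^{1/4} = x, i.e. f(A) at A = x^{-1}:
   V = (-A^3)^{-w(D)} <D>(A, A^{-1}, -A^2 - A^{-2}). *)
Definition jones (R : fieldType) (D : vdiagram) (x : R) : R :=
  let A := x^-1 in
  (- A ^+ 3) ^ (- writhe D) * bracket D A A^-1 (- A ^+ 2 - A ^- 2).

(* Signed cyclic graphs, as combinatorial maps: each edge e has two
   half-edges (e,false),(e,true); sc_rot is the cyclic order of half-edges
   around vertices (the non-isolated vertices are the sc_rot-orbits);
   sc_iso counts the isolated vertices; sc_sign e = true iff e positive. *)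
Record scgraph := SCGraph {
  sc_E : finType;
  sc_rot : sc_E * bool -> sc_E * bool;
  sc_iso : nat;
  sc_sign : sc_E -> bool }.

Definition flipd (E : Type) (h : E * bool) : E * bool := (h.1, ~~ h.2).

(* Boundary walk of the ribbon graph of the spanning subgraph with edge set
   S: from a half-edge of S go across its edge and rotate; half-edges of
   deleted edges are skipped by rotating further.  Orbits of this permutation
   = boundary components through non-isolated vertices of the subgraph, plus
   one orbit per vertex of G all of whose edges were deleted. *)
Definition face_step (G : scgraph) (S : {set sc_E G}) (h : sc_E G * bool) :=
  if h.1 \in S then @sc_rot G (flipd h) else @sc_rot G h.

Definition bc (G : scgraph) (S : {set sc_E G}) : nat :=
  fcard (face_step S) predT + sc_iso G.

(* F[G](A,B,d), the full expansion of the deletion/marking recursion: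
   positive edge: deleted -> B, kept(marked) -> A;
   negative edge: deleted -> A, kept(marked) -> B. *)
Definition Fpoly (R : comNzRingType) (G : scgraph) (A B d : R) : R :=
  \sum_(S : {set sc_E G})
     (\prod_(e : sc_E G)
        (if @sc_sign G e then (if e \in S then A else B)
         else (if e \in S then B else A)))
     * d ^+ (bc S).-1.

(* Corner i of crossing c is the corner between
   ports i and i+1.  col c = true: corners 0,2 coloured; false: corners 1,3.
   Going along the arc from port (c,i) to (c',j), its left side is corner i
   at c and corner j-1 at c'; the colouring must agree along every arc. *)
Definition colored (D : vdiagram) (col : {ffun 'I_(vd_n D) -> bool})
  (p : port D) : bool := col p.1 == ~~ odd p.2.

Definition checkerboard (D : vdiagram) (col : {ffun 'I_(vd_n D) -> bool})
  : Prop :=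
  forall p : port D,
    colored col p =
    colored col ((@vd_match D p).1, o4 (val (@vd_match D p).2 + 3)).

(* Signed Tait graph: edges = crossings; the two half-edges of crossing c
   sit at its two coloured corners; around each capped annulus the exterior
   circle goes from coloured corner i of c along the arc at port i+1 to the
   coloured corner j at c' where (c',j) = match (c,i+1); free loops give
   isolated vertices; sign + iff the A-smoothing joins the coloured corners,
   i.e. iff corners 0,2 are coloured. *)
Definition corner_of_dart (D : vdiagram) (col : {ffun 'I_(vd_n D) -> bool})
  (h : 'I_(vd_n D) * bool) : port D :=
  (h.1, o4 ((if col h.1 then 0 else 1) + 2 * h.2)).

Definition dart_of_corner (D : vdiagram) (p : port D) : 'I_(vd_n D) * bool :=
  (p.1, 2 <= val p.2)%N.

Definition tait_rot (D : vdiagram) (col : {ffun 'I_(vd_n D) -> bool})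
  (h : 'I_(vd_n D) * bool) : 'I_(vd_n D) * bool :=
  let p := corner_of_dart col h in
  dart_of_corner (@vd_match D (p.1, o4 (val p.2).+1)).

Definition tait (D : vdiagram) (col : {ffun 'I_(vd_n D) -> bool}) : scgraph :=
  @SCGraph 'I_(vd_n D) (tait_rot col) (vd_loops D) (fun c => col c).

(* Main.v *)
Require Import Defs.
From mathcomp Require Import all_boot all_order all_algebra.
Import GRing.Theory Num.Theory.
Set Implicit Arguments. Unset Strict Implicit. Unset Printing Implicit Defensive.


Lemma o4_val (k : nat) : nat_of_ord (o4 k) = k %% 4.
Proof. by rewrite /o4 inordK // ltn_pmod. Qed.

Lemma smoothK (D : vdiagram) (s : {ffun 'I_(vd_n D) -> bool}) (p : port D) :
  smooth s (smooth s p) = p.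
Proof.
case: p => c i; rewrite /smooth /=.
case E: (s c); case: i => [[|[|[|[|i]]]] Hi] //=; rewrite ?E ?o4_val /=;
  congr pair; apply: val_inj; rewrite /= ?o4_val //.
Qed.

Lemma colored_smooth (D : vdiagram) col (s : {ffun 'I_(vd_n D) -> bool}) (p : port D) :
  colored col (smooth s p) = ~~ colored col p.
Proof.
case: p => c i; rewrite /smooth /colored /=.
by case: (s c); case: (col c); case: i => [[|[|[|[|i]]]] Hi] //=; rewrite o4_val.
Qed.


Lemma colored3 (D : vdiagram) col (c : 'I_(vd_n D)) (j : 'I_4) :
  colored col (c, o4 (val j + 3)) = ~~ colored col (c, j).
Proof.
rewrite /colored /= o4_val.
by case: (col c); case: j => [[|[|[|[|i]]]] Hi].
Qed.

Lemma colored_match (D : vdiagram) col (hcol : checkerboard col) (p : port D) :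
  colored col (@vd_match D p) = ~~ colored col p.
Proof. by rewrite (hcol p); case: (vd_match p) => c j /=; rewrite colored3 negbK. Qed.

Lemma docK (D : vdiagram) col (h : 'I_(vd_n D) * bool) :
  dart_of_corner (corner_of_dart col h) = h.
Proof.
case: h => c b; rewrite /dart_of_corner /corner_of_dart /= o4_val.
by case: (col c); case: b.
Qed.

Lemma colored_cod (D : vdiagram) col (h : 'I_(vd_n D) * bool) :
  colored col (corner_of_dart col h).
Proof.
case: h => c b; rewrite /colored /corner_of_dart /= o4_val.
by case: (col c); case: b.
Qed.

Lemma codK (D : vdiagram) col (p : port D) :
  colored col p -> corner_of_dart col (dart_of_corner p) = p.
Proof.
case: p => c i; rewrite /colored /corner_of_dart /dart_of_corner /=.
case: (col c); case: i => [[|[|[|[|i]]]] Hi] //= _;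
  congr pair; apply: val_inj; rewrite /= ?o4_val //.
Qed.

Lemma face_stepE (D : vdiagram) col (s : {ffun 'I_(vd_n D) -> bool})
  (h : 'I_(vd_n D) * bool) :
  @face_step (tait col) [set c | s c == col c] h =
  dart_of_corner (@vd_match D (smooth s (corner_of_dart col h))).
Proof.
case: h => c b; rewrite /face_step /= /tait_rot /flipd inE /=.
rewrite /smooth /corner_of_dart /=.
case E: (s c); case F: (col c); case: b => /=; rewrite ?E ?F /=;
  do 3 f_equal; apply: val_inj; rewrite /= !o4_val; by vm_compute.
Qed.


Lemma ncurves_bc (D : vdiagram) (col : {ffun 'I_(vd_n D) -> bool})
  (hD : vd_wf D) (hcol : checkerboard col) (s : {ffun 'I_(vd_n D) -> bool}) :
  ncurves s = @bc (tait col) [set c | s c == col c].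
Proof.
case: hD => mK _ _ _.
rewrite /ncurves /bc /=; congr (_ + _).
set f := @face_step (tait col) [set c | s c == col c].
have fE : forall h, f h = dart_of_corner (@vd_match D (smooth s (corner_of_dart col h))).
  exact: face_stepE.
have colK : forall h, colored col (@vd_match D (smooth s (corner_of_dart col h))).
  by move=> h; rewrite colored_match // colored_smooth colored_cod.
have injf : injective f.
  move=> x y; rewrite !fE => /(congr1 (corner_of_dart col)).
  rewrite !codK // => /(congr1 (@vd_match D)); rewrite !mK.
  move/(congr1 (smooth s)); rewrite !smoothK => /(congr1 (@dart_of_corner D)).
  by rewrite !docK.
set e := state_rel s.
have sym_e : connect_sym e.
  apply: sym_connect_sym => p q; rewrite /e /state_rel.
  by case: (q == _); case: (p == _); case: (q == smooth s p); case: (p == smooth s q).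
have sym_e' : connect_sym (frel f) by move=> x y; exact: fconnect_sym.
pose dl (p : port D) := dart_of_corner (if colored col p then p else smooth s p).
have dl_smooth : forall p, dl (smooth s p) = dl p.
  move=> p; rewrite /dl colored_smooth smoothK.
  by case: (colored col p).
have dl_cmatch : forall p, colored col p -> f (dl (@vd_match D p)) = dl p.
  move=> p cp; rewrite /dl colored_match // cp /= fE codK; last first.
    by rewrite colored_smooth colored_match // cp.
  by rewrite smoothK mK.
have dl_match : forall p, connect (frel f) (dl p) (dl (@vd_match D p)).
  move=> p; case cp: (colored col p).
    by rewrite sym_e'; apply: connect1; rewrite /= dl_cmatch.
  have cm : colored col (@vd_match D p) by rewrite colored_match // cp.
  by apply: connect1; rewrite /= -{1}(mK p) dl_cmatch.
have codl : forall p, corner_of_dart col (dl p) = if colored col p then p else smooth s p.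
  move=> p; rewrite /dl codK //; case cp: (colored col p) => //.
  by rewrite colored_smooth cp.
have cl_a : closed e predT by [].
have adj : rel_adjunction (corner_of_dart col) e (frel f) predT.
  apply: (intro_adjunction sym_e' cl_a (fun p _ => dl p)).
    move=> x _; split.
      rewrite codl; case: (colored col x); first exact: connect0.
      by apply: connect1; rewrite /e /state_rel eqxx !orbT.
    move=> y _; rewrite /e /state_rel => /or4P[] /eqP ->.
    - exact: dl_match.
    - by rewrite sym_e'; apply: dl_match.
    - by rewrite dl_smooth connect0.
    - by rewrite dl_smooth connect0.
  move=> x' _; split.
    by rewrite /dl colored_cod docK connect0.
  move=> y' /= /eqP <-; rewrite fE codK //.
  apply: (@connect_trans _ e (smooth s (corner_of_dart col x'))).
    by apply: connect1; rewrite /e /state_rel eqxx !orbT.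
  by apply: connect1; rewrite /e /state_rel eqxx.
rewrite (adjunction_n_comp _ sym_e sym_e' cl_a adj).
by apply: eq_n_comp_r.
Qed.

Local Open Scope ring_scope.


Lemma bracket_Fpoly (D : vdiagram) (col : {ffun 'I_(vd_n D) -> bool})
  (hD : vd_wf D) (hcol : checkerboard col) (R : comNzRingType) (a b d : R) :
  bracket D a b d = @Fpoly R (tait col) a b d.
Proof.
rewrite /Fpoly /bracket.
rewrite (reindex (fun s : {ffun 'I_(vd_n D) -> bool} => [set c | s c == col c])) /=.
  apply: eq_bigr => s _; rewrite -(ncurves_bc hD hcol); congr (GRing.mul _ _).
  rewrite [RHS](bigID (fun e => s e)) /= -!prodr_const; congr (GRing.mul _ _);
    apply: eq_big => i; rewrite ?inE //.
    by case: (s i); case: (col i).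
  by case: (s i); case: (col i).
apply: onW_bij.
exists (fun S : {set 'I_(vd_n D)} => [ffun c => (c \in S) == col c]).
  by move=> s; apply/ffunP => c; rewrite ffunE inE; case: (s c); case: (col c).
by move=> S; apply/setP => c; rewrite inE ffunE; case: (c \in S); case: (col c).
Qed.


Unset Implicit Arguments.

Theorem corollary4p5 (D : vdiagram) (col : {ffun 'I_(vd_n D) -> bool})
  (hD : vd_wf D) (hcol : checkerboard col)
  (R : fieldType) (x : R) (hx : x != 0) :
  jones D x =
  (- x ^- 3) ^ (- writhe D) *
  @Fpoly R (tait col) x^-1 x (- x ^- 2 - x ^+ 2).
Proof.
rewrite /jones (bracket_Fpoly hD hcol) invrK !exprVn invrK.
by [].
Qed.
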